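(* Let $G$ be a triangle-free simple undirected graph on vertex set $[n]$. If $X\in\operatorname{R}_1[\mathcal{M}_n^+(G)]$, then $M(X)\ge 0$.
   Context: $\mathcal{M}_n^+(G)$ is the cone of $n\times n$ complex PSD matrices $X$ with $X_{ij}=0$ whenever $i\neq j$ and $\{i,j\}$ is not an edge of $G$. For a cone $\mathcal{C}\subseteq\mathcal{M}_n^+$, $\operatorname{R}_1[\mathcal{C}]$ is the convex cone generated by the rank-1 matrices in $\mathcal{C}$. The comparison matrix $M(X)$ is defined by $M(X)_{ii}=|X_{ii}|$ and $M(X)_{ij}=-|X_{ij}|$ for $i\ne j$. *)

(* Defs.v *)
From HB Require Import structures.
From mathcomp Require Import all_boot all_order all_algebra.
From mathcomp Require Import reals complex.
Set Implicit Arguments. Unset Strict Implicit. Unset Printing Implicit Defensive.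
Import Order.TTheory GRing.Theory Num.Theory.
Local Open Scope ring_scope.

Definition adjmx (C : numClosedFieldType) (m p : nat) (A : 'M[C]_(m, p)) : 'M[C]_(p, m) :=
  (map_mx (fun z : C => z^*) A)^T.

Definition psd (C : numClosedFieldType) (n : nat) (A : 'M[C]_n) : Prop :=
  adjmx A = A /\ forall v : 'cV[C]_n, 0 <= (adjmx v *m A *m v) 0 0.

Definition simple_graph (n : nat) (e : rel 'I_n) : Prop :=
  (forall i j, e i j = e j i) /\ (forall i, ~~ e i i).

Definition triangle_free (n : nat) (e : rel 'I_n) : Prop :=
  forall i j k, ~ [&& e i j, e j k & e i k].

Definition psd_graph_cone (C : numClosedFieldType) (n : nat) (e : rel 'I_n)
  (X : 'M[C]_n) : Prop :=
  psd X /\ (forall i j, i != j -> ~~ e i j -> X i j = 0).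

Definition rank1_cone (C : numClosedFieldType) (n : nat) (K : 'M[C]_n -> Prop)
  (X : 'M[C]_n) : Prop :=
  exists (k : nat) (c : 'I_k -> C) (Y : 'I_k -> 'M[C]_n),
    (forall l, 0 <= c l) /\ (forall l, K (Y l) /\ \rank (Y l) = 1%N) /\
    X = \sum_(l < k) c l *: Y l.

Definition comparison_mx (C : numClosedFieldType) (n : nat) (X : 'M[C]_n) : 'M[C]_n :=
  \matrix_(i, j) if i == j then `|X i i| else - `|X i j|.

(* Main.v *)
Require Import Defs.
From HB Require Import structures.
From mathcomp Require Import all_boot all_order all_algebra.
From mathcomp Require Import reals complex ring lra.
Set Implicit Arguments. Unset Strict Implicit. Unset Printing Implicit Defensive.
Import Order.TTheory GRing.Theory Num.Theory.
Local Open Scope ring_scope.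

Section Aux.
Variable C : numClosedFieldType.
Variable n : nat.

Lemma form_sum (A : 'M[C]_n) (v : 'cV[C]_n) :
  (adjmx v *m A *m v) 0 0 = \sum_i \sum_j (v i 0)^* * A i j * v j 0.
Proof.
rewrite !mxE.
under eq_bigr => j _ do rewrite !mxE big_distrl /=.
rewrite exchange_big /=; apply: eq_bigr => i _; apply: eq_bigr => j _.
by rewrite !mxE.
Qed.

Lemma sum_delta (i : 'I_n) (f : 'I_n -> C) : \sum_j ((i == j)%:R * f j) = f i.
Proof.
rewrite (bigD1 i) //= eqxx mul1r big1 ?addr0 // => j /negbTE.
by rewrite eq_sym => ->; rewrite mul0r.
Qed.

Lemma psd_herm (A : 'M[C]_n) i j : psd A -> A j i = (A i j)^*.
Proof.
case=> H _; have := congr1 (fun M : 'M[C]_n => M j i) H.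
by rewrite !mxE => ->.
Qed.

Lemma psd_diag (A : 'M[C]_n) i : psd A -> 0 <= A i i.
Proof.
case=> _ /(_ (\col_k (k == i)%:R)); rewrite form_sum (bigD1 i) //= (bigD1 i) //= => H.
rewrite [X in _ + X]big1 in H; last first.
  move=> k hk; apply: big1 => j _; rewrite !mxE (negbTE hk) rmorph0 !mul0r //.
rewrite [X in _ + X + _]big1 in H; last first.
  by move=> k hk; rewrite !mxE (negbTE hk) mulr0.
by rewrite !mxE eqxx rmorph1 mulr1 mul1r !addr0 in H.
Qed.

Lemma adjmxM m p q (A : 'M[C]_(m, p)) (B : 'M[C]_(p, q)) :
  adjmx (A *m B) = adjmx B *m adjmx A.
Proof. by rewrite /adjmx map_mxM trmx_mul. Qed.

Lemma adjmxE m p (A : 'M[C]_(m, p)) i j : adjmx A i j = (A j i)^*.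
Proof. by rewrite !mxE. Qed.

Lemma adjmxK m p (A : 'M[C]_(m, p)) : adjmx (adjmx A) = A.
Proof. by apply/matrixP => i j; rewrite !mxE conjCK. Qed.

Lemma rank1_minor (A : 'M[C]_n) i j : \rank A = 1%N -> A i i * A j j = A i j * A j i.
Proof.
move=> r1.
have n0 : (0 < n)%N by apply: leq_ltn_trans (ltn_ord i).
pose k0 : 'I_n := Ordinal n0.
pose L : 'M[C]_n := col_ebase A *m pid_mx 1. pose U := row_ebase A.
have E a b : A a b = L a k0 * U k0 b.
  rewrite -{1}(mulmx_ebase A) r1 -/L -/U mxE (bigD1 k0) //= big1 ?addr0 //.
  move=> k hk; rewrite mxE big1 ?mul0r // => m _; rewrite mxE.
  case: eqP => [/= emk|]; last by rewrite mulr0.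
  have : (val k != 0)%N by apply: contra hk => /eqP hk0; apply/eqP/val_inj.
  move=> H; have -> : (m < 1)%N = false.
    by rewrite emk ltnS leqn0 (negbTE H).
  by rewrite /= mulr0.
by rewrite !E; ring.
Qed.
End Aux.
Section Key.
Variables (C : numClosedFieldType) (n : nat) (e : rel 'I_n) (Y : 'M[C]_n).
Hypotheses (tf : triangle_free e) (hY : psd_graph_cone e Y) (r1 : \rank Y = 1%N).

Let hpsd : psd Y := hY.1.

Lemma Ynz_diag i j : Y i j != 0 -> Y j j != 0.
Proof.
move=> h; apply: contra h => /eqP hjj.
by rewrite -mul_conjC_eq0 -(psd_herm i j hpsd) -(rank1_minor i j r1) hjj mulr0.
Qed.

Lemma Yedge a b : a != b -> Y a b != 0 -> e a b.
Proof.
move=> ab; apply: contraR => /(hY.2 a b ab) ->; by rewrite eqxx.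
Qed.

Lemma nbr_unique i j k : j != i -> k != i -> Y i j != 0 -> Y i k != 0 -> j = k.
Proof.
move=> ji ki hij hik; apply/eqP; apply: contraT => jk.
have hjj := Ynz_diag hij; have hkk := Ynz_diag hik.
have hjk : Y j k != 0.
  apply: contra (mulf_neq0 hjj hkk) => /eqP h.
  by rewrite (rank1_minor j k r1) h mul0r.
exfalso; apply: (@tf i j k); apply/and3P; split; apply: Yedge => //; by rewrite eq_sym.
Qed.

Lemma atmost1 i (a : C) : 0 <= a ->
  \sum_j (((j != i) && (Y i j != 0))%:R * a) <= a.
Proof.
move=> a0.
case: (pickP (fun j => (j != i) && (Y i j != 0))) => [j0 /andP[j0i h0]|none].
  rewrite (bigD1 j0) //= j0i h0 mul1r big1 ?addr0 // => j jj0.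
  have : ~~ ((j != i) && (Y i j != 0)).
    apply/andP => -[ji hj]; move/eqP: jj0; apply; exact: nbr_unique ji j0i hj h0.
  by move/negbTE => ->; rewrite mul0r.
by rewrite big1 // => j _; rewrite none mul0r.
Qed.

Variable w : 'I_n -> C.
Hypothesis hw : forall i, 0 <= w i.

Let p i := Y i i * w i ^+ 2.
Let t i j : C := ((j != i) && (Y i j != 0))%:R.

Lemma p_ge0 i : 0 <= p i.
Proof. by rewrite /p mulr_ge0 ?exprn_ge0 ?psd_diag. Qed.

Lemma t_sym i j : t i j = t j i.
Proof. by rewrite /t eq_sym (psd_herm i j hpsd) conjC_eq0. Qed.

Lemma step_c i j :
  ((j != i)%:R * (`|Y i j| * w i * w j)) *+ 2 <= t i j * (p i + p j).
Proof.
rewrite /t; case ji: (j != i); last by rewrite /= !mul0r mul0rn.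
case: eqP => [->|/eqP hz] /=; first by rewrite normr0 !mul0r mulr0 mul0rn.
rewrite !mul1r.
have r0 : 0 <= `|Y i j| * w i * w j by rewrite !mulr_ge0.
have h1 : `|Y i j| * w i * w j *+ 2 \in Num.nneg by rewrite qualifE /= mulrn_wge0.
have h2 : p i + p j \in Num.nneg by rewrite qualifE /= addr_ge0 ?p_ge0.
rewrite -(ler_pXn2r (isT : (0 < 2)%N) h1 h2).
have hn : `|Y i j| ^+ 2 = Y i i * Y j j.
  by rewrite normCK -(psd_herm i j hpsd) (rank1_minor i j r1).
have -> : (`|Y i j| * w i * w j *+ 2) ^+ 2 = `|Y i j| ^+ 2 * w i ^+ 2 * w j ^+ 2 *+ 4.
  by ring.
rewrite hn /p.
have -> : Y i i * Y j j * w i ^+ 2 * w j ^+ 2 = Y i i * w i ^+ 2 * (Y j j * w j ^+ 2).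
  by ring.
exact: (real_leif_AGM2_scaled (ger0_real (p_ge0 i)) (ger0_real (p_ge0 j))).1.
Qed.

Lemma key :
  \sum_i \sum_j ((j != i)%:R * (`|Y i j| * w i * w j)) <= \sum_i Y i i * w i ^+ 2.
Proof.
rewrite -(ler_pMn2r (n := 2)) // -sumrMnl.
under eq_bigr => i _ do rewrite -sumrMnl.
apply: le_trans (_ : \sum_i \sum_j t i j * (p i + p j) <= _).
  by apply: ler_sum => i _; apply: ler_sum => j _; apply: step_c.
under eq_bigr => i _ do under eq_bigr => j _ do rewrite mulrDr.
under eq_bigr => i _ do rewrite big_split /=.
rewrite big_split /=.
have -> : \sum_i \sum_j t i j * p j = \sum_i \sum_j t i j * p i.
  rewrite exchange_big /=; apply: eq_bigr => i _; apply: eq_bigr => j _.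
  by rewrite t_sym.
rewrite mulr2n; apply: lerD; apply: ler_sum => i _;
  rewrite /t; exact: atmost1 (p_ge0 i).
Qed.
End Key.
Lemma main_gen (C : numClosedFieldType) (n : nat) (e : rel 'I_n) (X : 'M[C]_n) :
  triangle_free e -> rank1_cone (psd_graph_cone e) X -> psd (comparison_mx X).
Proof.
move=> tf [k [c [Y [hc [hY hX]]]]].
have Xe i j : X i j = \sum_l c l * Y l i j.
  by rewrite hX summxE; apply: eq_bigr => l _; rewrite mxE.
have Xh i j : X j i = (X i j)^*.
  rewrite !Xe rmorph_sum; apply: eq_bigr => l _.
  change (c l * Y l j i = (c l * Y l i j)^*); rewrite rmorphM (psd_herm i j (hY l).1.1); congr (_ * _); symmetry; exact: geC0_conj (hc l).
have Xd i : 0 <= X i i.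
  rewrite Xe; apply: sumr_ge0 => l _; apply: mulr_ge0 => //; apply: psd_diag; exact: (hY l).1.1.
have MH : adjmx (comparison_mx X) = comparison_mx X.
  apply/matrixP => i j; rewrite !mxE.
  case: (eqVneq i j) => [->|ij]; first by rewrite conj_normC.
  by rewrite (Xh i j) norm_conjC; apply/CrealP; rewrite rpredN normr_real.
split => // v.
set M := comparison_mx X in MH *.
have Freal : (adjmx v *m M *m v) 0 0 \is Num.real.
  apply/CrealP.
  have E : adjmx (adjmx v *m M *m v) = adjmx v *m M *m v.
    by rewrite !adjmxM adjmxK MH mulmxA.
  by move/(congr1 (fun A : 'M[C]_1 => A 0 0)): E; rewrite adjmxE.
pose w i := `|v i 0|.
have hw i : 0 <= w i by rewrite normr_ge0.
pose D := \sum_i X i i * w i ^+ 2.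
pose T := \sum_i \sum_j ((j != i)%:R * `|X i j| * ((v i 0)^* * v j 0)).
pose T' := \sum_i \sum_j ((j != i)%:R * (`|X i j| * w i * w j)).
have FE : (adjmx v *m M *m v) 0 0 = D - T.
  rewrite form_sum /D /T -sumrB; apply: eq_bigr => i _.
  have -> : X i i * w i ^+ 2 = \sum_j ((i == j)%:R * (X j j * w j ^+ 2)).
    by rewrite (sum_delta i (fun j => X j j * w j ^+ 2)).
  rewrite -sumrB; apply: eq_bigr => j _; rewrite /M mxE.
  case: (eqVneq i j) => [->|ij]; first by rewrite /= ger0_norm // /w normCKC; ring.
  by rewrite /=; ring.
have TD : T <= D.
  have Dge0 : 0 <= D by apply: sumr_ge0 => i _; rewrite mulr_ge0 ?exprn_ge0.
  have Treal : T \is Num.real.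
    have -> : T = D - (adjmx v *m M *m v) 0 0 by rewrite FE; ring.
    by apply: rpredB => //; apply: ger0_real.
  apply: le_trans (real_ler_norm Treal) _.
  apply: le_trans (_ : `|T| <= T') _.
    apply: le_trans (ler_norm_sum _ _ _) _; apply: ler_sum => i _.
    apply: le_trans (ler_norm_sum _ _ _) _; apply: ler_sum => j _.
    by rewrite !normrM normr_nat normr_id norm_conjC /w !mulrA lexx.
  apply: le_trans (_ : T' <= \sum_l c l * \sum_i \sum_j ((j != i)%:R * (`|Y l i j| * w i * w j))) _.
    under [X in _ <= X]eq_bigr => l _ do rewrite mulr_sumr.
    rewrite exchange_big /=; apply: ler_sum => i _.
    under [X in _ <= X]eq_bigr => l _ do rewrite mulr_sumr.
    rewrite exchange_big /=; apply: ler_sum => j _.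
    have -> : \sum_l c l * ((j != i)%:R * (`|Y l i j| * w i * w j))
        = (j != i)%:R * ((\sum_l c l * `|Y l i j|) * w i * w j).
      by rewrite !mulr_suml mulr_sumr; apply: eq_bigr => l _; ring.
    apply: ler_wpM2l; first by rewrite ler0n.
    apply: ler_pM; [by rewrite !mulr_ge0 | exact: hw | | exact: lexx].
    apply: ler_pM; [by rewrite normr_ge0 | exact: hw | | exact: lexx].
    rewrite Xe; apply: le_trans (ler_norm_sum _ _ _) _; apply: ler_sum => l _.
    by rewrite normrM (ger0_norm (hc l)).
  apply: le_trans (_ : _ <= \sum_l c l * \sum_i Y l i i * w i ^+ 2) _.
    apply: ler_sum => l _; apply: (ler_wpM2l (hc l)).
    exact: (key tf (hY l).1 (hY l).2 hw).
  under eq_bigr => l _ do rewrite mulr_sumr.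
  rewrite exchange_big /=; apply: ler_sum => i _.
  by rewrite Xe mulr_suml; apply: ler_sum => l _; rewrite mulrA lexx.
by rewrite FE subr_ge0.
Qed.

Unset Implicit Arguments.
Set Strict Implicit.

Theorem mainTheorem7 (R : realType) (n : nat) (e : rel 'I_n)
  (X : 'M[R[i]]_n) :
  simple_graph e -> triangle_free e ->
  rank1_cone (psd_graph_cone e) X ->
  psd (comparison_mx X).
Proof. by move=> _ tf h; exact: main_gen tf h. Qed.
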